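(* Let $F:L_n\to\Delta K$ be a $2$-filtration and let $p:\{0<1<\dots<2n\}\to L_n$ be a path. Define $f:L_n\to\{0,\dots,2n\}$ by $f(a)=\min\{x: a\le p(x)\}$, and let $G=F\circ p$. Then for any $x\le y$ in $\{0,\dots,2n\}$ and every dimension $q$, \[\mathsf{Dgm}_qG[x,y]=\sum_{[a,b]\in\mathsf{Int}\,L_n,\ f(a)=x,\ f(b)=y}\mathsf{Dgm}_qF[a,b].\]
   Context: $K$ is a finite simplicial complex, coefficients in a field. A path is a monotone injective map $p$ from the chain $\{0<\dots<2n\}$ to $L_n=\{0,\dots,n\}^2$ (product order) with $p(0)=(0,0)$, $p(2n)=(n,n)$, consecutive grades differing by $1$ in exactly one coordinate. For a finite poset $P$ with least element $\bot$ and greatest $\top$: $\mathsf{Int}\,P=\{[a,b]:a\le b\}$ with $[a,b]\le[c,d]$ iff $a\le c$, $b\le d$; a $P$-filtration is a monotone map $F$ from $P$ to subcomplexes of $K$ with $F(\bot)=\emptyset$, $F(\top)=K$; $ZB_qF[a,b]=\dim(Z_qF(a)\cap B_qF(b))$ for $b\ne\top$ and $\dim Z_qF(a)$ for $b=\top$ ($Z_q,B_q$ = $q$-cycles, $q$-boundaries); $\mathsf{Dgm}_qF$ is the unique function on $\mathsf{Int}\,P$ with $ZB_qF[c,d]=\sum_{[a,b]\le[c,d]}\mathsf{Dgm}_qF[a,b]$. A $2$-filtration is an $L_n$-filtration; $G$ is a $\{0,\dots,2n\}$-filtration. *)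

(* Defs.v *)
From HB Require Import structures.
From mathcomp Require Import all_boot all_order all_algebra.
Set Implicit Arguments. Unset Strict Implicit. Unset Printing Implicit Defensive.
Import GRing.Theory Num.Theory.

Definition is_complex (V : finType) (K : {set {set V}}) : Prop :=
  forall s, s \in K -> s != set0 /\ (forall t : {set V}, t \subset s -> t != set0 -> t \in K).

Definition is_subcomplex (V : finType) (K S : {set {set V}}) : Prop :=
  S \subset K /\ is_complex S.

(* Chains are row vectors indexed by all subsets of V (via enum_rank);
   vertices are ordered by enum_rank. *)
Section Chains.
Variables (k : fieldType) (V : finType).
Local Notation N := #|{set V}|.
Local Open Scope ring_scope.

Definition vpos (s : {set V}) (v : V) : nat :=
  #|[set u in s | (enum_rank u < enum_rank v)%N]|.

(* boundary matrix: entry (s,t) = coefficient of t in the boundary of s,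
   i.e. d s = sum_{v in s} (-1)^(pos v) (s \ v), the empty face omitted *)
Definition bd : 'M[k]_N :=
  \matrix_(i < N, j < N)
    \sum_(v in (enum_val i : {set V}))
      (if ((enum_val j : {set V}) != set0) && ((enum_val j : {set V}) == (enum_val i : {set V}) :\ v)
       then (-1) ^+ vpos (enum_val i : {set V}) v else 0).

(* q-chains of S : span of the q-simplices (q+1 vertices) of S *)
Definition chains (q : nat) (S : {set {set V}}) : 'M[k]_N :=
  \matrix_(i < N, j < N)
    (if [&& i == j, (enum_val i : {set V}) \in S & #|(enum_val i : {set V})| == q.+1]
     then 1 else 0).

Definition cycles (q : nat) (S : {set {set V}}) : 'M[k]_N :=
  (chains q S :&: kermx bd)%MS.

Definition boundaries (q : nat) (S : {set {set V}}) : 'M[k]_N :=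
  (chains q.+1 S *m bd)%MS.

End Chains.

Definition is_filtration (P : finType) (le : rel P) (bot top : P)
    (V : finType) (K : {set {set V}}) (F : P -> {set {set V}}) : Prop :=
  [/\ forall a b, le a b -> F a \subset F b,
      forall a, is_subcomplex K (F a),
      F bot = set0 & F top = K].

Definition ZB (k : fieldType) (P : finType) (top : P) (V : finType)
    (F : P -> {set {set V}}) (q : nat) (a b : P) : nat :=
  if b == top then \rank (cycles k q (F a))
  else \rank (cycles k q (F a) :&: boundaries k q (F b))%MS.

Definition is_Dgm (k : fieldType) (P : finType) (le : rel P) (top : P)
    (V : finType) (F : P -> {set {set V}}) (q : nat) (D : P -> P -> int) : Prop :=
  forall c d, le c d ->
    ((ZB k top F q c d)%:Z =
      \sum_(a : P) \sum_(b : P | [&& le a b, le a c & le b d]) D a b)%R.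

Definition Ln (n : nat) : finType := ('I_n.+1 * 'I_n.+1)%type.

Definition leL (n : nat) : rel (Ln n) :=
  fun a b => (a.1 <= b.1)%N && (a.2 <= b.2)%N.

Definition botL (n : nat) : Ln n := (ord0, ord0).
Definition topL (n : nat) : Ln n := (ord_max, ord_max).

Definition leC (m : nat) : rel 'I_m := fun x y => (x <= y)%N.

Definition is_path (n : nat) (p : 'I_(2 * n).+1 -> Ln n) : Prop :=
  [/\ forall x y : 'I_(2 * n).+1, (x <= y)%N -> leL (p x) (p y),
      injective p,
      p ord0 = botL n,
      p ord_max = topL n &
      forall x y : 'I_(2 * n).+1, y = x.+1 :> nat ->
        (((p y).1 = (p x).1.+1 :> nat) /\ ((p y).2 = (p x).2 :> nat)) \/
        (((p y).1 = (p x).1 :> nat) /\ ((p y).2 = (p x).2.+1 :> nat))].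

Definition pathmin (n : nat) (p : 'I_(2 * n).+1 -> Ln n) (a : Ln n) : nat :=
  \big[minn/(2 * n)%N]_(x : 'I_(2 * n).+1 | leL a (p x)) (x : nat).

(* Main.v *)
Require Import Defs.
From mathcomp Require Import all_boot all_order all_algebra.
From mathcomp Require Import zify.
Import GRing.Theory.
Set Implicit Arguments. Unset Strict Implicit.

Lemma mobius_uniq m (H : 'I_m -> 'I_m -> int) :
  (forall c d : 'I_m, (c <= d)%N ->
     (\sum_(a : 'I_m) \sum_(b : 'I_m | [&& (a <= b)%N, (a <= c)%N & (b <= d)%N]) H a b = 0)%R) ->
  forall c d : 'I_m, (c <= d)%N -> H c d = 0%R.
Proof.
move=> hS.
suff h : forall N (c d : 'I_m), (c + d < N)%N -> (c <= d)%N -> H c d = 0%R.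
  by move=> c d; apply: (h (c + d).+1 c d (ltnSn _)).
elim=> [//|N IH] c d hN hcd.
have := hS c d hcd.
rewrite (bigD1 c) //= (bigD1 d) /=; last by rewrite hcd !leqnn.
have h1 : (\sum_(b < m | [&& (c <= b)%N, (c <= c)%N & (b <= d)%N] && (b != d)) H c b = 0)%R.
  apply: big1 => b /andP [/and3P [hcb _ hbd] hbn].
  have hb : (b < d)%N by rewrite ltn_neqAle hbd andbT; apply/negP => /eqP/val_inj/eqP; rewrite (negbTE hbn).
  apply: IH => //; lia.
have h2 : (\sum_(a < m | a != c) \sum_(b < m | [&& (a <= b)%N, (a <= c)%N & (b <= d)%N]) H a b = 0)%R.
  apply: big1 => a han; apply: big1 => b /and3P [hab hac hbd].
  have ha : (a < c)%N by rewrite ltn_neqAle hac andbT; apply/negP => /eqP/val_inj/eqP; rewrite (negbTE han).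
  apply: IH => //; lia.
by rewrite h1 h2 !addr0.
Qed.

Lemma leL_trans n (a b c : Ln n) : leL a b -> leL b c -> leL a c.
Proof. by rewrite /leL => /andP [h1 h2] /andP [h3 h4]; rewrite (leq_trans h1 h3) (leq_trans h2 h4). Qed.

Lemma leL_top n (a : Ln n) : leL a (topL n).
Proof. by rewrite /leL /topL /= -ltnS ltn_ord -ltnS ltn_ord. Qed.

Lemma bigmin_le (I : finType) (P : pred I) (F : I -> nat) d i :
  P i -> (\big[minn/d]_(j | P j) F j <= F i)%N.
Proof.
move=> Pi; rewrite -big_filter.
have : i \in filter P (index_enum I) by rewrite mem_filter Pi mem_index_enum.
elim: (filter P _) => //= j s IH; rewrite in_cons big_cons => /orP [/eqP <- | /IH h].
  exact: geq_minl.
exact: leq_trans (geq_minr _ _) h.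
Qed.

Lemma pm_le n (p : 'I_(2 * n).+1 -> Ln n) a (x : 'I_(2 * n).+1) :
  leL a (p x) -> (pathmin p a <= x)%N.
Proof. by move=> h; rewrite /pathmin; exact: (@bigmin_le _ (fun y => leL a (p y)) (fun y : 'I_(2 * n).+1 => (y : nat)) _ x h). Qed.

Lemma pm_ub n (p : 'I_(2 * n).+1 -> Ln n) a : (pathmin p a <= 2 * n)%N.
Proof.
rewrite /pathmin; apply: (big_ind (fun v => v <= 2 * n)%N) => //.
- by move=> u v hu _; apply: leq_trans (geq_minl u v) hu.
- by move=> x _; rewrite -ltnS; apply: ltn_ord.
Qed.

Lemma pm_att n (p : 'I_(2 * n).+1 -> Ln n) a :
  p ord_max = topL n -> leL a (p (inord (pathmin p a))).
Proof.
move=> ptop; rewrite /pathmin.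
apply: (big_ind (fun v => leL a (p (inord v)))).
- have -> : (inord (2 * n) : 'I_(2 * n).+1) = ord_max by apply: val_inj; rewrite /= inordK.
  rewrite ptop; exact: leL_top.
- by move=> u v hu hv; case: (leqP u v).
- by move=> x hx; rewrite inord_val.
Qed.

Lemma pm_key n (p : 'I_(2 * n).+1 -> Ln n) a (c : 'I_(2 * n).+1) :
  is_path p -> leL a (p c) = (pathmin p a <= c)%N.
Proof.
case=> mono _ _ ptop _; apply/idP/idP; first exact: pm_le.
move=> h; apply: (leL_trans (pm_att a ptop)); apply: mono.
by rewrite inordK // ltnS pm_ub.
Qed.

Theorem mainTheorem7 (k : fieldType) (V : finType) (K : {set {set V}})
    (n : nat) (F : Ln n -> {set {set V}}) (p : 'I_(2 * n).+1 -> Ln n)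
    (q : nat) (DF : Ln n -> Ln n -> int)
    (DG : 'I_(2 * n).+1 -> 'I_(2 * n).+1 -> int)
    (x y : 'I_(2 * n).+1) :
  is_complex K ->
  is_filtration (@leL n) (botL n) (topL n) K F ->
  is_path p ->
  is_Dgm k (@leL n) (topL n) F q DF ->
  is_Dgm k (@leC (2 * n).+1) ord_max (fun z => F (p z)) q DG ->
  (x <= y)%N ->
  DG x y = (\sum_(a : Ln n) \sum_(b : Ln n |
              [&& leL (n := n) a b, pathmin p a == (x : nat) & pathmin p b == (y : nat)]) DF a b)%R.
Proof.
move=> _ _ hp hDF hDG hxy.
have [pmono pinj _ ptop _] := hp.
pose fo (a : Ln n) : 'I_(2 * n).+1 := inord (pathmin p a).
have foE a : (fo a : nat) = pathmin p a by rewrite inordK // ltnS pm_ub.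
pose E (x' y' : 'I_(2 * n).+1) := (\sum_(a : Ln n) \sum_(b : Ln n |
   [&& leL a b, pathmin p a == (x' : nat) & pathmin p b == (y' : nat)]) DF a b)%R.
change (DG x y = E x y).
apply/eqP; rewrite -subr_eq0; apply/eqP.
apply: (@mobius_uniq _ (fun x' y' => (DG x' y' - E x' y')%R) _ x y hxy).
move=> c d hcd.
under eq_bigr => a _ do rewrite sumrB.
rewrite sumrB.
apply/eqP; rewrite subr_eq0; apply/eqP.
have := hDG c d hcd; rewrite /leC => <-.
have -> : ZB k ord_max (fun z => F (p z)) q c d = ZB k (topL n) F q (p c) (p d).
  by rewrite /ZB -ptop (inj_eq pinj).
rewrite (hDF _ _ (pmono _ _ hcd)).
rewrite pair_big_dep /=.
rewrite (@partition_big _ _ _ _ _ _ _ (fun i : Ln n * Ln n => (fo i.1, fo i.2))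
   (fun j : 'I_(2 * n).+1 * 'I_(2 * n).+1 => [&& (j.1 <= j.2)%N, (j.1 <= c)%N & (j.2 <= d)%N])) /=; last first.
  move=> [a b] /= /and3P [hab hac hbd].
  rewrite !foE (pm_le hac) (pm_le hbd) andbT.
  rewrite -(foE b) andbT; apply: pm_le; apply: leL_trans hab (pm_att b ptop).
rewrite [RHS]pair_big_dep /=.
apply: eq_bigr => [[x' y']] /= /and3P [hxy' hxc hyd].
rewrite /E pair_big_dep; apply: eq_bigl => [[a b]] /=.
rewrite xpair_eqE -!val_eqE /= !foE !(pm_key _ _ hp).
case: (pathmin p a =P x') => [->|]; case: (pathmin p b =P y') => [->|];
  by rewrite ?andbF ?andbT //= ?hxc ?hyd ?andbT.
Qed.
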